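(* Let $t,a_1,\dots,a_n\in\mathbb{C}$ and \[P(x,y)=\prod_{i=1}^n\big((x-a_i)^2-y\big)+t\in\mathbb{C}[x,y].\] If the $a_i$ are pairwise distinct and $t\neq 0$, then $P(x,y)$ is irreducible in $\mathbb{C}[x,y]$. *)

(* Defs.v *)
From mathcomp Require Import all_boot all_order all_algebra.
From mathcomp Require Import complex.
From mathcomp Require Import reals.
Set Implicit Arguments. Unset Strict Implicit. Unset Printing Implicit Defensive.
Import GRing.Theory Num.Theory.
Local Open Scope ring_scope.

Definition irreducible_elt (A : comUnitRingType) (p : A) : Prop :=
  [/\ p != 0, p \isn't a GRing.unit &
      forall q r : A, p = q * r -> q \is a GRing.unit \/ r \is a GRing.unit].

(* C[x,y] is represented as {poly {poly C}}: the outer variable is x,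
   the inner (coefficient) variable is y. *)
Definition Ypoly (C : nzRingType) : {poly {poly C}} := ('X : {poly C})%:P.

Definition Ppoly (C : comNzRingType) (n : nat) (a : 'I_n -> C) (t : C)
  : {poly {poly C}} :=
  \prod_(i < n) (('X - (a i)%:P%:P) ^+ 2 - Ypoly C) + t%:P%:P.

(* Main.v *)
Require Import Defs.
From HB Require Import structures.
From mathcomp Require Import all_boot all_order all_algebra.
Import GRing.Theory Num.Theory.
From mathcomp Require Import ring zify.
From mathcomp Require Import complex reals.
Local Open Scope ring_scope.
Section S.
Variable C : fieldType.
Local Notation A := {poly {poly C}}.
Definition inA : {rmorphism C -> A} := (polyC \o polyC)%FUN.
Lemma commA (f : {rmorphism {poly C} -> A}) (u : A) : commr_rmorph f u.
Proof. by move=> x; rewrite /GRing.comm mulrC. Qed.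
Lemma commA0 (u : A) : commr_rmorph inA u.
Proof. by move=> x; rewrite /GRing.comm mulrC. Qed.
Definition evY (Y0 : A) : {poly C} -> A := horner_morph (commA0 Y0).
HB.instance Definition _ (Y0 : A) := GRing.RMorphism.on (evY Y0).
Definition ev (X0 Y0 : A) : A -> A := horner_morph (commA (evY Y0) X0).
HB.instance Definition _ (X0 Y0 : A) := GRing.RMorphism.on (ev X0 Y0).

Lemma ev_X X0 Y0 : ev X0 Y0 'X = X0.
Proof. exact: horner_morphX. Qed.
Lemma ev_Y X0 Y0 : ev X0 Y0 ('X%:P) = Y0.
Proof. rewrite /ev horner_morphC; exact: horner_morphX. Qed.
Lemma ev_C X0 Y0 c : ev X0 Y0 (c%:P%:P) = c%:P%:P.
Proof. rewrite /ev horner_morphC; exact: horner_morphC. Qed.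

Lemma ev_comp X1 Y1 X0 Y0 p :
  ev X1 Y1 (ev X0 Y0 p) = ev (ev X1 Y1 X0) (ev X1 Y1 Y0) p.
Proof.
have E : forall (f : {rmorphism A -> A}) (g : {poly C} -> A) (X : A) (p : A),
    f ((map_poly g p).[X]) = (map_poly (f \o g) p).[f X].
  by move=> f g X q; rewrite -horner_map map_poly_comp.
have E' : forall (f : {rmorphism A -> A}) (g : C -> A) (X : A) (q : {poly C}),
    f ((map_poly g q).[X]) = (map_poly (f \o g) q).[f X].
  by move=> f g X q; rewrite -horner_map map_poly_comp.
have -> : ev X0 Y0 p = (map_poly (evY Y0) p).[X0] by [].
rewrite (E (ev X1 Y1)).
rewrite /ev /horner_morph; congr (_.[_]); apply: eq_map_poly => q /=.
have -> : evY Y0 q = (map_poly inA q).[Y0] by [].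
have -> : evY (ev X1 Y1 Y0) q = (map_poly inA q).[ev X1 Y1 Y0] by [].
rewrite (E' (ev X1 Y1)); congr (_.[_]); apply: eq_map_poly => c /=.
by rewrite ev_C.
Qed.

Lemma ev_Psi p : ev 'X (('X%:P)^+2) p = map_poly (fun q => q \Po 'X^2) p.
Proof.
rewrite /ev /horner_morph.
have -> : map_poly (evY (('X%:P)^+2)) p = map_poly (polyC \o (fun q => q \Po 'X^2)) p.
  apply: eq_map_poly => q /=.
  rewrite /evY /horner_morph /comp_poly -rmorphXn -horner_map /=.
  rewrite map_poly_comp; reflexivity.
rewrite map_poly_comp.
exact: comp_polyXr.
Qed.

Lemma ev_Psi_inj p : ev 'X (('X%:P)^+2) p = 0 -> p = 0.
Proof.
rewrite ev_Psi => H; apply/polyP => i; rewrite coef0.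
have := congr1 (fun r : A => r`_i) H; rewrite coef0 coef_map_id0 ?comp_poly0 //.
move/eqP; rewrite comp_poly_eq0 ?size_polyXn //; by move/eqP.
Qed.

Variable h2 : (2 : C) != 0.
Variables (n : nat) (a : 'I_n -> C) (t : C).
Hypotheses (hn : (0 < n)%N) (ainj : injective a) (t0 : t != 0).

Local Notation u := ('X%:P : A).
Local Notation v := ('X : A).
Local Notation Phi := (ev (u + v) ((v - u)^+2)).
Local Notation Lam := (ev ((v + u) * (2^-1 : C)%:P%:P) ((v - u) * (2^-1 : C)%:P%:P)).
Lemma Lam_Phi p : Lam (Phi p) = ev 'X (('X%:P)^+2) p.
Proof.
rewrite ev_comp rmorphD rmorphXn rmorphB /= ev_X ev_Y.
have e : (2^-1 : C)%:P%:P *+ 2 = 1 :> A.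
  by rewrite -rmorphMn -rmorphMn /= -mulr_natr mulVf.
congr ev.
  transitivity (v * ((2^-1 : C)%:P%:P *+ 2)); last by rewrite e mulr1.
  by ring.
congr (_ ^+ 2).
transitivity (u * ((2^-1 : C)%:P%:P *+ 2)); last by rewrite e mulr1.
by ring.
Qed.

Lemma Phi_inj p : Phi p = 0 -> p = 0.
Proof. by move=> H; apply: ev_Psi_inj; rewrite -Lam_Phi H rmorph0. Qed.

Lemma Phi_X : Phi 'X = u + v.
Proof. exact: ev_X. Qed.
Lemma Phi_Y : Phi 'X%:P = (v - u)^+2.
Proof. exact: ev_Y. Qed.
Lemma Phi_C c : Phi (c%:P%:P) = c%:P%:P.
Proof. exact: ev_C. Qed.

Definition r i := a i / 2.
Definition g : {poly C} := \prod_(i < n) ('X - (r i)%:P).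
Definition c4 : C := \prod_(i < n) (4 : C).
Definition G : A := (c4%:P%:P * g%:P) * g^:P + t%:P%:P.

Lemma Phi_P : Phi (Ppoly a t) = G.
Proof.
rewrite /Ppoly rmorphD rmorph_prod /= Phi_C /G; congr (_ + _).
have -> : g^:P = \prod_(i < n) (v - (r i)%:P%:P).
  by rewrite /g rmorph_prod; apply: eq_bigr => i _; rewrite rmorphB /= map_polyX map_polyC.
have -> : g%:P = \prod_(i < n) (u - (r i)%:P%:P).
  by rewrite /g rmorph_prod; apply: eq_bigr => i _; rewrite rmorphB /=.
have -> : c4%:P%:P = \prod_(i < n) (4 : C)%:P%:P :> A by rewrite /c4 !rmorph_prod.
rewrite -!big_split /=; apply: eq_bigr => i _.
rewrite rmorphB rmorphXn rmorphB /Ypoly /= Phi_X Phi_Y Phi_C.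
have -> : a i = r i *+ 2 by rewrite /r -mulr_natr mulfVK.
rewrite !rmorphMn /= -!rmorphMn /=.
have -> : (4 : C)%:P%:P = 4%:R :> A by rewrite !polyC_natr.
ring.
Qed.

Lemma r_inj : injective r.
Proof. by move=> i j; rewrite /r => /(mulIf (invr_neq0 h2)) /ainj. Qed.

Lemma c4_neq0 : c4 != 0.
Proof.
rewrite /c4 prodf_seq_neq0; apply/allP => i _ /=.
have -> : (4 : C) = 2 * 2 by rewrite -natrM.
by rewrite mulf_neq0.
Qed.

Lemma size_g : size g = n.+1.
Proof. by rewrite /g size_prod_XsubC /index_enum unlock -enumT size_enum_ord. Qed.

Lemma g_neq0 : g != 0.
Proof. by rewrite -size_poly_eq0 size_g. Qed.

Lemma size_G : size G = n.+1.
Proof.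
have K : c4%:P * g != 0 by rewrite mulf_neq0 ?polyC_eq0 ?c4_neq0 ?g_neq0.
rewrite /G -polyCM size_polyDl size_Cmul ?size_map_polyC ?size_g //.
by apply: leq_ltn_trans (size_polyC_leq1 _) _.
Qed.

Lemma swap_G : swapXY G = G.
Proof.
rewrite /G rmorphD rmorphM rmorphM /= !swapXY_polyC swapXY_map_polyC !map_polyC.
by rewrite mulrAC.
Qed.

Lemma G_neq0 : G != 0.
Proof. by rewrite -size_poly_eq0 size_G. Qed.

Lemma root_lemma Q R : Q * R = G -> (1 < size Q)%N -> (n < sizeY Q)%N.
Proof.
move=> QR sQ.
have Q0 : Q != 0 by apply: contraTneq sQ => ->; rewrite size_poly0.
have hr : forall i, root (lead_coef Q) (r i).
  move=> i.
  pose psi := map_poly (horner_eval (r i)) : A -> {poly C}.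
  have psiG : psi G = t%:P.
    rewrite /psi /G rmorphD rmorphM rmorphM /= !map_polyC /= /horner_eval.
    have -> : g.[r i] = 0.
      by rewrite /g horner_prod (bigD1 i) //= hornerXsubC subrr mul0r.
    rewrite mulr0 mul0r add0r hornerC.
    done.
  have psiQR : psi Q * psi R = t%:P by rewrite -rmorphM /= QR.
  have pQ0 : psi Q != 0 by apply: contra_eq_neq psiQR => ->; rewrite mul0r eq_sym polyC_eq0.
  have pR0 : psi R != 0 by apply: contra_eq_neq psiQR => ->; rewrite mulr0 eq_sym polyC_eq0.
  have := congr1 (fun p : {poly C} => size p) psiQR; rewrite /=; rewrite size_mul // size_polyC t0 => e.
  have s1 : size (psi Q) = 1%N.
    have := size_poly_gt0 (psi Q); have := size_poly_gt0 (psi R).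
    rewrite pQ0 pR0 => z1 z2; move: e z1 z2; move: (size (psi Q)) (size (psi R)) => x y; rewrite -subn1; lia.
  apply/rootP.
  have := coef_map (horner_eval (r i)) Q (size Q).-1.
  rewrite -/psi nth_default ?s1 /=; last by rewrite -ltnS (ltn_predK sQ).
  by rewrite /horner_eval /lead_coef => ->.
have := max_poly_roots (p := lead_coef Q) (rs := map r (enum 'I_n)).
rewrite size_map size_enum_ord lead_coef_eq0 Q0 map_inj_uniq ?enum_uniq //; last exact: r_inj.
move=> H; apply: leq_trans (max_size_lead_coefXY Q); apply: H => //.
by apply/allP => x /mapP [j _ ->].
Qed.

Lemma const_of_sizes (X : A) : X != 0 -> (size X <= 1)%N -> (sizeY X <= 1)%N ->
  exists c, c != 0 /\ X = c%:P%:P.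
Proof.
move=> X0 sX yX.
have e1 := size1_polyC sX.
have s0 : leq (size X`_0) 1 by apply: leq_trans (max_size_coefXY X 0) yX.
have e2 := size1_polyC s0.
exists X`_0`_0; split; last by rewrite {1}e1 {1}e2.
by apply: contra_neq X0 => e; rewrite e1 e2 e.
Qed.

Lemma unit_const c : c != 0 -> (c%:P%:P : A) \is a GRing.unit.
Proof.
move=> c0; rewrite poly_unitE size_polyC polyC_eq0 c0 /= coefC /=.
by rewrite poly_unitE size_polyC c0 /= coefC /= unitfE.
Qed.

Lemma split_lemma Q R : Q * R = G ->
  (exists c, c != 0 /\ Q = c%:P%:P) \/ (exists c, c != 0 /\ R = c%:P%:P).
Proof.
move=> QR.
have RQ : R * Q = G by rewrite mulrC.
have Q0 : Q != 0 by apply: contra_eq_neq QR => ->; rewrite mul0r eq_sym G_neq0.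
have R0 : R != 0 by apply: contra_eq_neq QR => ->; rewrite mulr0 eq_sym G_neq0.
have ss : (size Q + size R).-1 = n.+1 by rewrite -size_mul // QR size_G.
have sy : (sizeY Q + sizeY R).-1 = n.+1.
  by rewrite !sizeYE -size_mul ?swapXY_eq0 // -rmorphM QR /= swap_G size_G.
have z1 := size_poly_gt0 Q; have z2 := size_poly_gt0 R.
have z3 : (0 < sizeY Q)%N by rewrite lt0n sizeY_eq0.
have z4 : (0 < sizeY R)%N by rewrite lt0n sizeY_eq0.
rewrite Q0 in z1; rewrite R0 in z2.
have LQ := @root_lemma Q R QR; have LR := @root_lemma R Q RQ.
move: ss sy; rewrite -!subn1 => ss sy.
case: (ltnP 1 (size Q)) => hQ; case: (ltnP 1 (size R)) => hR.
- have := LQ hQ; have := LR hR; lia.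
- right; apply: const_of_sizes => //; have := LQ hQ; lia.
- left; apply: const_of_sizes => //; have := LR hR; lia.
- lia.
Qed.

Lemma main_gen : irreducible_elt (Ppoly a t).
Proof.
have PP := Phi_P.
split.
- by apply: contra_eq_neq PP => ->; rewrite rmorph0 eq_sym G_neq0.
- apply/negP => /unitrP [y [_ hy]].
  have := congr1 Phi hy; rewrite rmorphM rmorph1 /= PP => e.
  have y0 : Phi y != 0 by apply: contra_eq_neq e => ->; rewrite mulr0 eq_sym oner_neq0.
  have := congr1 (fun p : A => size p) e; rewrite /= size_mul ?G_neq0 // size_G size_poly1.
  have := size_poly_gt0 (Phi y); rewrite y0 => z; move: z; move: (size (Phi y)) => k.
  rewrite -subn1; lia.
- move=> q r0 e.
  have := congr1 Phi e; rewrite rmorphM /= PP => /esym /split_lemma [[c [c0 hc]]|[c [c0 hc]]].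
  + left; have -> : q = c%:P%:P; last exact: unit_const.
    by apply/eqP; rewrite -subr_eq0; apply/eqP/Phi_inj; rewrite rmorphB /= hc Phi_C subrr.
  + right; have -> : r0 = c%:P%:P; last exact: unit_const.
    by apply/eqP; rewrite -subr_eq0; apply/eqP/Phi_inj; rewrite rmorphB /= hc Phi_C subrr.
Qed.
End S.

Theorem mainTheorem2 (R : realType) (n : nat) (hn : (0 < n)%N)
    (a : 'I_n -> R[i]) (t : R[i]) :
  injective a -> t != 0 -> irreducible_elt (Ppoly a t).
Proof.
move=> ainj t0; apply: main_gen => //.
by rewrite pnatr_eq0.
Qed.
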